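(* The only pairs of natural numbers $(x,y)$ (with $0 \in \mathbb{N}$) such that $3^x-2^y$ is a perfect square are $(0,0),(1,1),(2,3),(3,1),(4,5)$.
   Context: Here $\mathbb{N}=\{0,1,2,\dots\}$, and a perfect square means $n^2$ for some $n\in\mathbb{N}$. *)

(* Defs.v *)
From Stdlib Require Import ZArith Lia.
Open Scope Z_scope.
Definition perfect_square (z : Z) : Prop := exists n : nat, z = (Z.of_nat n) ^ 2.

(* Main.v *)
Require Import Defs.
From Stdlib Require Import ZArith Lia.
Open Scope Z_scope.

Lemma pwS (b : Z) (n : nat) : b ^ Z.of_nat (S n) = b * b ^ Z.of_nat n.
Proof. rewrite Nat2Z.inj_succ, Z.pow_succ_r; lia. Qed.

Lemma pw_pos (b : Z) (n : nat) : 0 < b -> 0 < b ^ Z.of_nat n.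
Proof. intros; apply Z.pow_pos_nonneg; lia. Qed.

Lemma pw_inj (b : Z) (n m : nat) : 1 < b -> b ^ Z.of_nat n = b ^ Z.of_nat m -> n = m.
Proof. intros H E. apply Z.pow_inj_r in E; lia. Qed.

Lemma div3 (a : Z) : exists q r, a = 3*q + r /\ 0 <= r < 3.
Proof. exists (a / 3), (a mod 3). split. apply Z.div_mod; lia. apply Z.mod_pos_bound; lia. Qed.

Lemma sq3 (b : Z) : (3 | b) \/ exists q, b*b = 3*q+1.
Proof.
  destruct (div3 b) as [q [r [Hb Hr]]]. subst b.
  assert (r = 0 \/ r = 1 \/ r = 2) as [ -> | [ -> | -> ] ] by lia.
  - left. exists q; ring.
  - right. exists (3*q*q+2*q); ring.
  - right. exists (3*q*q+4*q+1); ring.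
Qed.

Lemma odd_sq8 (k : Z) : exists q, (2*k+1)*(2*k+1) = 8*q+1.
Proof.
  destruct (Z.Even_or_Odd k) as [[m Em]|[m Em]]; subst k.
  - exists (m*(2*m+1)); ring.
  - exists ((2*m+1)*(m+1)); ring.
Qed.

Lemma pow3_mod8 (k : nat) : (exists q, 3 ^ Z.of_nat (2*k) = 8*q+1) /\
                             (exists q, 3 ^ Z.of_nat (2*k+1) = 8*q+3).
Proof.
  induction k as [|k [[q Hq] _]].
  - split; [exists 0 | exists 0]; reflexivity.
  - replace (2 * S k + 1)%nat with (S (S (S (2*k)))) by lia.
    replace (2 * S k)%nat with (S (S (2*k))) by lia.
    rewrite !pwS, Hq. split. exists (9*q+1); ring. exists (27*q+3); ring.
Qed.

Lemma pow2_mod3 (k : nat) : (exists q, 2 ^ Z.of_nat (2*k) = 3*q+1) /\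
                             (exists q, 2 ^ Z.of_nat (2*k+1) = 3*q+2).
Proof.
  induction k as [|k [[q Hq] _]].
  - split; [exists 0 | exists 0]; reflexivity.
  - replace (2 * S k + 1)%nat with (S (S (S (2*k)))) by lia.
    replace (2 * S k)%nat with (S (S (2*k))) by lia.
    rewrite !pwS, Hq. split. exists (4*q+1); ring. exists (8*q+2); ring.
Qed.

Lemma pow2_factor (y : nat) : forall a b, 0 < a -> a * b = 2 ^ Z.of_nat y ->
  exists i, a = 2 ^ Z.of_nat i.
Proof.
  induction y as [|y IH]; intros a b Ha E.
  - exists 0%nat. change (2 ^ Z.of_nat 0) with 1 in E. change (2 ^ Z.of_nat 0) with 1. assert (0 < b) by nia. nia.
  - rewrite pwS in E.
    destruct (Z.Even_or_Odd a) as [[a' Ea]|[a' Ea]]; subst a.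
    + destruct (IH a' b) as [i Hi]; [lia|nia|]. exists (S i). rewrite pwS; lia.
    + destruct (Z.Even_or_Odd b) as [[b' Eb]|[b' Eb]]; subst b.
      * apply (IH _ b'); [lia|nia].
      * exfalso. nia.
Qed.

Definition mul (p q : Z*Z) : Z*Z :=
  (fst p * fst q - 2 * snd p * snd q, fst p * snd q + snd p * fst q).

Fixpoint P (n : nat) : Z*Z :=
  match n with O => (1,0) | S n => mul (P n) (1,1) end.

Lemma mul_assoc p q r : mul (mul p q) r = mul p (mul q r).
Proof. destruct p, q, r; unfold mul; cbn [fst snd]; f_equal; ring. Qed.

Lemma P_add n m : P (n + m) = mul (P n) (P m).
Proof.
  induction m as [|m IH].
  - rewrite Nat.add_0_r. simpl. destruct (P n); unfold mul; cbn [fst snd]; f_equal; ring.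
  - rewrite Nat.add_succ_r. simpl. rewrite IH, mul_assoc. reflexivity.
Qed.

Lemma PA v : exists k1 k2, P (4 * 2^v)%nat =
  (1 + 8 * 2 ^ Z.of_nat v * k1, 4 * 2 ^ Z.of_nat v * (2*k2+1)).
Proof.
  induction v as [|v [k1 [k2 IH]]].
  - exists (-1), (-1). reflexivity.
  - replace (4 * 2 ^ S v)%nat with (4 * 2^v + 4 * 2^v)%nat by (simpl; lia).
    rewrite P_add, IH. set (c := 2 ^ Z.of_nat v).
    rewrite Nat2Z.inj_succ, Z.pow_succ_r by lia. fold c.
    exists (k1 + 4*c*k1*k1 - 2*c*(2*k2+1)*(2*k2+1)), (k2 + 4*c*k1*(2*k2+1)).
    unfold mul; cbn [fst snd]; f_equal; ring.
Qed.

Lemma PB v o : exists Y1 Y2, P (4 * 2^v * o)%nat =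
  (1 + 8 * 2 ^ Z.of_nat v * Y1, 4 * 2 ^ Z.of_nat v * Z.of_nat o + 8 * 2 ^ Z.of_nat v * Y2).
Proof.
  destruct (PA v) as [k1 [k2 HA]].
  induction o as [|o [Y1 [Y2 IH]]].
  - exists 0, 0. rewrite Nat.mul_0_r. change (P 0) with (1,0). f_equal; ring.
  - replace (4 * 2^v * S o)%nat with (4 * 2^v * o + 4 * 2^v)%nat by lia.
    rewrite P_add, IH, HA. set (c := 2 ^ Z.of_nat v). rewrite Nat2Z.inj_succ.
    exists (Y1 + k1 + 8*c*Y1*k1 - 4*c*(Z.of_nat o + 2*Y2)*(2*k2+1)),
           (k2 + 4*c*Y1*(2*k2+1) + 4*c*Z.of_nat o*k1 + Y2 + 8*c*Y2*k1).
    unfold mul; cbn [fst snd]; f_equal; ring.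
Qed.

Lemma two_adic (j : nat) : (0 < j)%nat -> exists v o, j = (2^v * (2*o+1))%nat.
Proof.
  induction j as [j IH] using lt_wf_ind. intros Hj.
  destruct (Nat.Even_or_Odd j) as [[h Eh]|[h Eh]].
  - destruct (IH h) as [v [o E]]; try lia. exists (S v), o. simpl. lia.
  - exists 0%nat, h. simpl. lia.
Qed.

Lemma skolem n : (snd (P n) = 1 \/ snd (P n) = -1) -> Nat.Odd n -> n = 1%nat \/ n = 3%nat.
Proof.
  intros Hs [m Hm].
  destruct (Nat.Even_or_Odd m) as [[j Ej]|[j Ej]].
  - destruct j as [|j']. lia.
    destruct (two_adic (S j')) as [v [o Eo]]; [lia|].
    replace n with (1 + 4 * 2^v * (2*o+1))%nat in Hs by lia.
    rewrite P_add in Hs. destruct (PB v (2*o+1)) as [Y1 [Y2 E]]. rewrite E in Hs.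
    cbn [P mul fst snd] in Hs. unfold mul in Hs. cbn [fst snd] in Hs.
    rewrite Nat2Z.inj_add, Nat2Z.inj_mul in Hs.
    assert (0 < 2 ^ Z.of_nat v) by (apply Z.pow_pos_nonneg; lia).
    set (c := 2 ^ Z.of_nat v) in *. exfalso.
    destruct Hs as [Hs|Hs].
    + assert (c * (2 * Z.of_nat o + 1 + 2*(Y1+Y2)) = 0) by lia.
      apply Z.mul_eq_0 in H0. lia.
    + lia.
  - destruct j as [|j']. lia.
    destruct (two_adic (S j')) as [v [o Eo]]; [lia|].
    replace n with (3 + 4 * 2^v * (2*o+1))%nat in Hs by lia.
    rewrite P_add in Hs. destruct (PB v (2*o+1)) as [Y1 [Y2 E]]. rewrite E in Hs.
    cbn [P mul fst snd] in Hs. unfold mul in Hs. cbn [fst snd] in Hs.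
    rewrite Nat2Z.inj_add, Nat2Z.inj_mul in Hs.
    assert (0 < 2 ^ Z.of_nat v) by (apply Z.pow_pos_nonneg; lia).
    set (c := 2 ^ Z.of_nat v) in *. exfalso.
    destruct Hs as [Hs|Hs].
    + assert (c * (2*Y1 - 5*(2 * Z.of_nat o + 1) - 10*Y2) = 0) by lia.
      apply Z.mul_eq_0 in H0. lia.
    + lia.
Qed.

Lemma P3 m : (1 <= m)%nat -> (3 | fst (P m) + 2 * snd (P m)).
Proof.
  intros Hm. destruct m as [|m]. lia.
  change (P (S m)) with (mul (P m) (1,1)). destruct (P m) as [A B].
  unfold mul; cbn [fst snd]. exists A. ring.
Qed.

Lemma pm3 a b : ~(3|a) -> ~(3|b) -> (3 | a - b) \/ (3 | a + b).
Proof.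
  intros Ha Hb.
  destruct (div3 a) as [qa [ra [Ea Hra]]]. destruct (div3 b) as [qb [rb [Eb Hrb]]].
  assert (ra = 0 \/ ra = 1 \/ ra = 2) as [Hr|[Hr|Hr]] by lia;
  assert (rb = 0 \/ rb = 1 \/ rb = 2) as [Hr'|[Hr'|Hr']] by lia; subst ra rb;
  first [ exfalso; apply Ha; exists qa; lia
        | exfalso; apply Hb; exists qb; lia
        | left; exists (qa - qb); lia
        | right; exists (qa + qb + 1); lia ].
Qed.

Lemma div3_b a b m : a*a + 2*b*b = 3 ^ Z.of_nat (S m) -> (3 | a) -> (3 | b).
Proof.
  intros H [al Ha]. rewrite pwS in H. subst a.
  destruct (sq3 b) as [Hb|[q Hq]]; auto. exfalso. nia.
Qed.

Lemma not3b a b m : a*a + 2*b*b = 3 ^ Z.of_nat (S m) -> ~(3 | a) -> ~(3 | b).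
Proof.
  intros H Ha [bl Hb]. rewrite pwS in H. subst b.
  destruct (sq3 a) as [Ha'|[q Hq]]; auto. nia.
Qed.

Definition DP (n : nat) (a b : Z) : Prop := exists s t, (s=1\/s=-1)/\(t=1\/t=-1)/\
   a = s*fst(P n) /\ b = s*t*snd(P n).

Lemma step m a b :
  (forall a b, a*a + 2*b*b = 3 ^ Z.of_nat m -> (m = 0%nat \/ ~(3|a)) -> DP m a b) ->
  a*a + 2*b*b = 3 ^ Z.of_nat (S m) -> ~(3|a) -> (3 | a - b) -> DP (S m) a b.
Proof.
  intros IH H Ha [d Hd]. unfold DP.
  assert (Eb : b = a - d*3) by lia. subst b.
  rewrite pwS in H.
  assert (H' : (a - 2*d)*(a - 2*d) + 2*(-d)*(-d) = 3 ^ Z.of_nat m) by nia.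
  assert (Hc : m = 0%nat \/ ~(3 | a - 2*d)).
  { destruct m as [|m']. auto. right. intros H3.
    pose proof (div3_b _ _ _ H' H3) as [e He]. destruct H3 as [f Hf].
    apply Ha. exists (f - 2*e). lia. }
  destruct (IH _ _ H' Hc) as [s [t [Hs [Ht [E1 E2]]]]].
  change (P (S m)) with (mul (P m) (1,1)). destruct (P m) as [A B] eqn:EP.
  unfold mul; cbn [fst snd] in *.
  destruct Ht as [Ht|Ht]; subst t.
  - exists s, 1. destruct Hs; subst s; repeat split; auto; lia.
  - destruct m as [|m'].
    + simpl in EP. injection EP as <- <-. exists s, 1.
      destruct Hs; subst s; repeat split; auto; lia.
    + exfalso. pose proof (P3 (S m') ltac:(lia)) as [g Hg]. rewrite EP in Hg.
      cbn [fst snd] in Hg. apply Ha. exists (s*g).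
      destruct Hs; subst s; lia.
Qed.

Lemma desc n : forall a b, a*a + 2*b*b = 3 ^ Z.of_nat n -> (n = 0%nat \/ ~(3|a)) -> DP n a b.
Proof.
  induction n as [|m IH]; intros a b H Hn.
  - change (3 ^ Z.of_nat 0) with 1 in H.
    assert (b = 0) by nia. subst b. assert (a = 1 \/ a = -1) by nia.
    exists a, 1. simpl. repeat split; auto; lia.
  - destruct Hn as [Hn|Hn]; [discriminate|].
    pose proof (not3b _ _ _ H Hn) as Hb.
    destruct (pm3 _ _ Hn Hb) as [Hd|Hd].
    + apply step; auto.
    + assert (H2 : a*a + 2*(-b)*(-b) = 3 ^ Z.of_nat (S m)) by lia.
      destruct (step m a (-b) IH H2 Hn ltac:(replace (a - - b) with (a+b) by ring; auto))
        as [s [t [Hs [Ht [E1 E2]]]]].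
      exists s, (-t). repeat split; auto. lia. lia.
Qed.

Lemma pow3_odd k : exists q, 3 ^ Z.of_nat k = 2*q+1.
Proof.
  destruct (Nat.Even_or_Odd k) as [[l El]|[l El]]; subst k;
  destruct (pow3_mod8 l) as [[q1 H1] [q2 H2]].
  - exists (4*q1). lia.
  - exists (4*q2+1). lia.
Qed.

Lemma cat k m : (1 <= k)%nat -> 3 ^ Z.of_nat k - 1 = 2 ^ Z.of_nat m ->
  (k = 1 /\ m = 1)%nat \/ (k = 2 /\ m = 3)%nat.
Proof.
  intros Hk H.
  destruct (Nat.Even_or_Odd k) as [[l El]|[l El]].
  - subst k. destruct l as [|l]; [lia|].
    assert (ET : 3 ^ Z.of_nat (2 * S l) = 3 ^ Z.of_nat (S l) * 3 ^ Z.of_nat (S l)).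
    { rewrite <- Z.pow_add_r by lia. f_equal. lia. }
    rewrite ET in H. set (T := 3 ^ Z.of_nat (S l)) in *.
    assert (HT : T = 3 * 3 ^ Z.of_nat l) by (unfold T; apply pwS).
    pose proof (pw_pos 3 l ltac:(lia)).
    destruct (pow2_factor m (T - 1) (T + 1)) as [p Hp]; [lia| rewrite <- H; ring |].
    destruct (pow2_factor m (T + 1) (T - 1)) as [q Hq]; [lia| rewrite <- H; ring |].
    destruct p as [|[|p]].
    + change (2 ^ Z.of_nat 0) with 1 in Hp. lia.
    + change (2 ^ Z.of_nat 1) with 2 in Hp. right.
      assert (S l = 1)%nat. { apply (pw_inj 3); [lia|]. change (3 ^ Z.of_nat 1) with 3. fold T. lia. }
      assert (T = 3) by lia. split; [lia|].
      apply (pw_inj 2); [lia|]. change (2 ^ Z.of_nat 3) with 8. lia.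
    + rewrite !pwS in Hp. exfalso.
      destruct q as [|[|q]].
      * change (2 ^ Z.of_nat 0) with 1 in Hq. lia.
      * change (2 ^ Z.of_nat 1) with 2 in Hq. lia.
      * rewrite !pwS in Hq. lia.
  - subst k. destruct (pow3_mod8 l) as [_ [q Hq]]. rewrite Hq in H.
    destruct m as [|[|[|m]]].
    + change (2 ^ Z.of_nat 0) with 1 in H. lia.
    + change (2 ^ Z.of_nat 1) with 2 in H. left. split; [|lia].
      apply (pw_inj 3); [lia|]. rewrite Hq. change (3 ^ Z.of_nat 1) with 3. lia.
    + change (2 ^ Z.of_nat 2) with 4 in H. lia.
    + rewrite !pwS in H. lia.
Qed.

Theorem mainTheorem1 : forall x y : nat,
  perfect_square (3 ^ Z.of_nat x - 2 ^ Z.of_nat y) <->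
  ((x = 0 /\ y = 0) \/ (x = 1 /\ y = 1) \/ (x = 2 /\ y = 3) \/
   (x = 3 /\ y = 1) \/ (x = 4 /\ y = 5))%nat.
Proof.
  intros x y; split.
  2: { intros [[-> ->]|[[-> ->]|[[-> ->]|[[-> ->]|[-> ->]]]]].
       - exists 0%nat; reflexivity.
       - exists 1%nat; reflexivity.
       - exists 1%nat; reflexivity.
       - exists 5%nat; reflexivity.
       - exists 7%nat; reflexivity. }
  intros [n Hn]. rewrite Z.pow_2_r in Hn.
  assert (Hz : 0 <= Z.of_nat n) by lia. set (z := Z.of_nat n) in *.
  destruct x as [|x'].
  { change (3 ^ Z.of_nat 0) with 1 in Hn.
    destruct y as [|y']; [left; lia|].
    rewrite (pwS 2) in Hn. pose proof (pw_pos 2 y' ltac:(lia)). exfalso; nia. }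
  pose proof (pw_pos 3 x' ltac:(lia)) as H3p.
  assert (H3 : 3 ^ Z.of_nat (S x') = 3 * 3 ^ Z.of_nat x') by apply pwS.
  destruct y as [|y'].
  { change (2 ^ Z.of_nat 0) with 1 in Hn. exfalso.
    destruct (sq3 z) as [[w Hw]|[q Hq]]; [subst z; rewrite Hw in Hn; nia | lia]. }
  destruct (Nat.Even_or_Odd (S y')) as [[l El]|[l El]].
  { exfalso. rewrite El in Hn. destruct (pow2_mod3 l) as [[q Hq] _]. rewrite Hq in Hn.
    destruct (sq3 z) as [[w Hw]|[q' Hq']]; [subst z; rewrite Hw in Hn; nia | lia]. }
  destruct (pow3_odd (S x')) as [o3 Ho3].
  destruct (Z.Even_or_Odd z) as [[w Hw]|[w Hw]].
  { exfalso. rewrite El in Hn. rewrite Nat.add_1_r, (pwS 2) in Hn. rewrite Hw in Hn. lia. }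
  destruct (odd_sq8 w) as [q8 Hq8]. rewrite <- Hw in Hq8.
  destruct l as [|l'].
  - (* y = 1 *)
    simpl in El. rewrite El in *. change (2 ^ Z.of_nat 1) with 2 in Hn.
    assert (Xodd : Nat.Odd (S x')).
    { destruct (Nat.Even_or_Odd (S x')) as [[k Ek]|Ho]; auto. exfalso.
      rewrite Ek in Hn. destruct (pow3_mod8 k) as [[q Hq] _]. lia. }
    assert (N3 : ~ (3 | z)).
    { intros [w' Hw']. rewrite Hw' in Hn. nia. }
    destruct (desc (S x') z 1 ltac:(lia) (or_intror N3)) as [s [t [Hs [Ht [E1 E2]]]]].
    assert (HB : snd (P (S x')) = 1 \/ snd (P (S x')) = -1).
    { destruct Hs, Ht; subst s t; lia. }
    destruct (skolem _ HB Xodd) as [E|E]; rewrite E in *; lia.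
  - (* y >= 3 *)
    assert (Ey : S y' = S (S (S (2 * l')))) by lia. rewrite Ey in Hn. rewrite !(pwS 2) in Hn.
    pose proof (pw_pos 2 (2*l') ltac:(lia)) as H2p.
    destruct (Nat.Even_or_Odd (S x')) as [[k Ek]|[k Ek]].
    2: { exfalso. rewrite Ek in Hn. destruct (pow3_mod8 k) as [_ [q Hq]]. rewrite Hq in Hn. lia. }
    destruct k as [|k']; [lia|].
    assert (ET : 3 ^ Z.of_nat (2 * S k') = 3 ^ Z.of_nat (S k') * 3 ^ Z.of_nat (S k')).
    { rewrite <- Z.pow_add_r by lia. f_equal. lia. }
    rewrite Ek, ET in Hn.
    set (T := 3 ^ Z.of_nat (S k')) in *.
    assert (HT : T = 3 * 3 ^ Z.of_nat k') by (unfold T; apply pwS).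
    pose proof (pw_pos 3 k' ltac:(lia)).
    destruct (pow3_odd (S k')) as [oT HoT]. fold T in HoT.
    set (Y := 2 ^ Z.of_nat (2 * l')) in *.
    assert (HY : (T - z) * (T + z) = 2 ^ Z.of_nat (S (S (S (2*l'))))) by (rewrite !pwS; fold Y; lia).
    destruct (pow2_factor (S (S (S (2*l')))) (T - z) (T + z)) as [i Hi]; [| exact HY |].
    { pose proof (pw_pos 2 (S (S (S (2*l')))) ltac:(lia)) as Hpp. rewrite <- HY in Hpp.
      apply (Z.mul_pos_cancel_r _ (T + z)); lia. }
    destruct (pow2_factor (S (S (S (2*l')))) (T + z) (T - z)) as [j Hj]; [lia| rewrite <- HY; ring |].
    assert (Hj2 : exists j', T + z = 4 * 2 ^ Z.of_nat j').
    { destruct j as [|[|j']].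
      - change (2 ^ Z.of_nat 0) with 1 in Hj. lia.
      - change (2 ^ Z.of_nat 1) with 2 in Hj. lia.
      - exists j'. rewrite !pwS in Hj. lia. }
    destruct Hj2 as [j' Hj'].
    destruct i as [|[|i']].
    + change (2 ^ Z.of_nat 0) with 1 in Hi. lia.
    + change (2 ^ Z.of_nat 1) with 2 in Hi.
      destruct (cat (S k') (S j') ltac:(lia) ltac:(rewrite (pwS 2); fold T; lia)) as [[Ek1 _]|[Ek1 _]].
      * assert (HT3 : T = 3) by (unfold T; rewrite Ek1; reflexivity).
        assert (z = 1) by lia. subst z. rewrite HT3 in Hn.
        assert (HY1 : Y = 1) by lia.
        right; right; left. split; [lia|].
        assert (2 * l' = 0)%nat by (apply (pw_inj 2); [lia|]; fold Y; rewrite HY1; reflexivity).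
        lia.
      * assert (HT3 : T = 9) by (unfold T; rewrite Ek1; reflexivity).
        assert (z = 7) by lia. subst z. rewrite HT3 in Hn.
        assert (HY1 : Y = 4) by lia.
        right; right; right; right. split; [lia|].
        assert (2 * l' = 2)%nat by (apply (pw_inj 2); [lia|]; fold Y; rewrite HY1; reflexivity).
        lia.
    + rewrite !pwS in Hi. exfalso. lia.
Qed.
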